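(* Let $k,q\ge0$, $p=k+q$, $m=2^p$, $n=2^q$, and $U=\frac{1}{\sqrt{2^p}}H(2^p)$. Fix an integer $c$ with $0\le c\le 2^k-1$ and the input state $\vec s=(1+nc,2+nc,\dots,n+nc)$ of $n$ identical particles. For an output state $\vec t=(t_1,\dots,t_n)$, define $t'_i=((t_i-1)\bmod n)+1$ and let $\vec t'$ be the nondecreasing rearrangement of $(t'_1,\dots,t'_n)$. Then $\vec t$ is suppressed for $U$ with input $\vec s$ if and only if $\vec t'$ is suppressed for $U'=\frac{1}{\sqrt{2^q}}H(2^q)$ with input $(1,2,\dots,n)$ (one particle per mode). This holds both when the particles are bosons and when they are fermions.
   Context: For $m=2^p$, the Sylvester matrix $H(m)$ is defined recursively by $H(1)=[1]$ and $H(2^p)=\begin{bmatrix}H(2^{p-1})&H(2^{p-1})\\ H(2^{p-1})&-H(2^{p-1})\end{bmatrix}$, rows and columns indexed $1,\dots,m$. An $n$-particle state on $m$ modes is a nondecreasing tuple $\vec t=(t_1\le\dots\le t_n)$ with $t_i\in\{1,\dots,m\}$; $\mu_k(\vec t)=|\{i:t_i=k\}|$. For input $\vec s$ and output $\vec t$ under unitary $U$, the scattering matrix is $S_{i,j}=U_{t_i,s_j}$; the bosonic amplitude is $\mathrm{perm}\,S/\sqrt{\prod_k\mu_k(\vec s)!\prod_k\mu_k(\vec t)!}$ and the fermionic amplitude is $\det S/\sqrt{\prod_k\mu_k(\vec s)!\prod_k\mu_k(\vec t)!}$. An output state is suppressed if its amplitude is zero. *)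

(* Defs.v *)
From HB Require Import structures.
From mathcomp Require Import all_boot all_order all_algebra all_fingroup all_field.
Set Implicit Arguments. Unset Strict Implicit. Unset Printing Implicit Defensive.
Import Order.TTheory GRing.Theory Num.Theory.
Local Open Scope ring_scope.

(* Sylvester matrix H(2^p), 0-indexed entries (i, j in 0 .. 2^p - 1),
   following the recursive block definition
   H(2^(p+1)) = [[H, H], [H, -H]]. *)
Fixpoint sylv (p : nat) (i j : nat) : int :=
  match p with
  | 0 => 1
  | p'.+1 =>
    let h := (2 ^ p')%N in
    if (i < h)%N then
      (if (j < h)%N then sylv p' i j else sylv p' i (j - h))
    else
      (if (j < h)%N then sylv p' (i - h) j else - sylv p' (i - h) (j - h))
  end.

Definition sylvester (p : nat) : 'M[algC]_(2 ^ p) :=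
  \matrix_(i, j) (sylv p i j)%:~R.

(* Entries of U = H(2^p) / sqrt(2^p), with 1-indexed rows/columns a, b. *)
Definition Uhad (p : nat) (a b : nat) : algC :=
  (sqrtC ((2 ^ p)%:R))^-1 * (sylv p a.-1 b.-1)%:~R.

(* An n-particle state on m modes: nondecreasing list of length n
   with entries in {1, ..., m}. *)
Definition is_state (m n : nat) (t : seq nat) : bool :=
  [&& size t == n, sorted leq t & all (fun x => (1 <= x <= m)%N) t].

Definition mu (t : seq nat) (k : nat) : nat := count_mem k t.

Definition scat (U : nat -> nat -> algC) (n : nat) (s t : seq nat) : 'M[algC]_n :=
  \matrix_(i < n, j < n) U (nth 0%N t i) (nth 0%N s j).

Definition permanent (n : nat) (A : 'M[algC]_n) : algC :=
  \sum_(sg : 'S_n) \prod_(i < n) A i (sg i).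

Definition norm_fact (m : nat) (s t : seq nat) : algC :=
  sqrtC (((\prod_(1 <= k < m.+1) (mu s k)`!) * (\prod_(1 <= k < m.+1) (mu t k)`!))%N%:R).

Definition boson_amp (U : nat -> nat -> algC) (m n : nat) (s t : seq nat) : algC :=
  permanent (scat U n s t) / norm_fact m s t.

Definition fermion_amp (U : nat -> nat -> algC) (m n : nat) (s t : seq nat) : algC :=
  \det (scat U n s t) / norm_fact m s t.

Definition boson_suppressed U m n s t : Prop := boson_amp U m n s t = 0.
Definition fermion_suppressed U m n s t : Prop := fermion_amp U m n s t = 0.

Definition reduce_state (n : nat) (t : seq nat) : seq nat :=
  sort leq [seq ((x.-1 %% n).+1)%N | x <- t].

(* Main.v *)
Require Import Defs.
From HB Require Import structures.
From mathcomp Require Import all_boot all_order all_algebra all_fingroup all_field.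
From mathcomp Require Import zify ring.
Set Implicit Arguments. Unset Strict Implicit. Unset Printing Implicit Defensive.
Import Order.TTheory GRing.Theory Num.Theory.
Local Open Scope ring_scope.

Lemma sylv_sq p i j : (sylv p i j = 1 \/ sylv p i j = -1)%R.
Proof.
elim: p i j => [|p IH] i j /=; first by left.
case: ifP => _; case: ifP => _ //; case: (IH (i - 2^p)%N (j - 2^p)%N) => ->; auto.
Qed.

Lemma sylv_kron k q a b : (a < 2 ^ (k + q))%N -> (b < 2 ^ (k + q))%N ->
  sylv (k + q) a b = (sylv k (a %/ 2 ^ q) (b %/ 2 ^ q) * sylv q (a %% 2 ^ q) (b %% 2 ^ q))%R.
Proof.
have nq : (0 < 2 ^ q)%N by rewrite expn_gt0.
elim: k a b => [|k IH] a b.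
  by rewrite add0n => ha hb; rewrite !divn_small // !modn_small // mul1r.
rewrite addSn /= => ha hb.
have hE : (2 ^ (k + q) = 2 ^ k * 2 ^ q)%N by rewrite expnD.
have hE1 : (2 ^ (k+q).+1 = 2 * 2 ^ (k + q))%N by rewrite expnS.
have dv x : (x < 2 ^ (k+q))%N -> (x %/ 2 ^ q < 2 ^ k)%N by move=> hx; rewrite ltn_divLR // -hE.
have sp x : (x < 2 ^ (k+q).+1)%N -> (2 ^ (k+q) <= x)%N -> exists y, x = (2 ^ k * 2 ^ q + y)%N /\ (y < 2 ^ (k + q))%N.
  move=> hx' hx; exists (x - 2 ^ (k+q))%N; rewrite -hE; split; [by rewrite subnKC | rewrite hE1 in hx'; lia].
have dv2 y : ((2 ^ k * 2 ^ q + y) %/ 2 ^ q = 2 ^ k + y %/ 2 ^ q)%N by rewrite divnMDl.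
have md2 y : ((2 ^ k * 2 ^ q + y) %% 2 ^ q = y %% 2 ^ q)%N by rewrite modnMDl.
have ge y : (2 ^ k + y < 2 ^ k)%N = false by lia.
have sb y : (2 ^ k + y - 2 ^ k = y)%N by lia.
have sb2 y : (2 ^ k * 2 ^ q + y - 2 ^ (k+q) = y)%N by rewrite -hE; lia.
case: (ltnP a (2 ^ (k+q))) => Ha; case: (ltnP b (2 ^ (k+q))) => Hb.
- by rewrite IH // (dv a Ha) (dv b Hb).
- have [y [-> Hy]] := sp b hb Hb.
  by rewrite sb2 IH // (dv a Ha) dv2 ge sb md2.
- have [y [-> Hy]] := sp a ha Ha.
  by rewrite sb2 IH // (dv b Hb) dv2 ge sb md2.
- have [y [-> Hy]] := sp a ha Ha; have [z [-> Hz]] := sp b hb Hb.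
  by rewrite !sb2 IH // !dv2 !ge !sb !md2 mulNr.
Qed.
Lemma permanent_rs n (d : 'I_n -> algC) (s : 'S_n) (A : 'M[algC]_n) :
  permanent (\matrix_(i, j) (d i * A (s i) j)) = (\prod_i d i) * permanent A.
Proof.
rewrite /permanent mulr_sumr.
rewrite (reindex_inj (mulgI s)) /=.
apply: eq_bigr => sg _.
under eq_bigr => i _ do rewrite mxE.
rewrite big_split /=. congr (_ * _).
rewrite (reindex_inj (@perm_inj _ s^-1)) /=.
by apply: eq_bigr => i _; rewrite permKV permM permKV.
Qed.

Lemma det_rs n (d : 'I_n -> algC) (s : 'S_n) (A : 'M[algC]_n) :
  \det (\matrix_(i, j) (d i * A (s i) j)) = ((\prod_i d i) * (-1) ^+ s) * \det A.
Proof.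
have -> : \matrix_(i, j) (d i * A (s i) j) = diag_mx (\row_i d i) *m row_perm s A.
  by apply/matrixP => i j; rewrite mul_diag_mx !mxE.
rewrite det_mulmx det_diag row_permE det_mulmx det_perm mulrA.
by congr (_ * _ * _); apply: eq_bigr => i _; rewrite mxE.
Qed.

Lemma amp_iff (x y c nf1 nf2 : algC) : c != 0 -> nf1 != 0 -> nf2 != 0 -> x = c * y ->
  (x / nf1 = 0 <-> y / nf2 = 0).
Proof.
move=> hc h1 h2 ->.
have E : (c * y / nf1 == 0) = (y / nf2 == 0).
  by rewrite !mulf_eq0 !invr_eq0 (negbTE hc) (negbTE h1) (negbTE h2) /= !orbF.
by split => H; apply/eqP; [rewrite -E | rewrite E]; apply/eqP.
Qed.

Lemma norm_fact_neq0 m s t : norm_fact m s t != 0.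
Proof.
rewrite /norm_fact sqrtC_eq0 pnatr_eq0 -lt0n muln_gt0 !prodn_gt0 // => i; exact: fact_gt0.
Qed.

Lemma sqrt2_neq0 p : sqrtC ((2 ^ p)%N%:R : algC) != 0.
Proof. by rewrite sqrtC_eq0 pnatr_eq0 expn_eq0. Qed.

Theorem proposition4 (k q c : nat) (hc : (c <= 2 ^ k - 1)%N) (t : seq nat)
  (ht : is_state (2 ^ (k + q)) (2 ^ q) t) :
  let p := (k + q)%N in
  let m := (2 ^ p)%N in
  let n := (2 ^ q)%N in
  let s := iota (1 + n * c) n in
  (boson_suppressed (Uhad p) m n s t <->
   boson_suppressed (Uhad q) n n (iota 1 n) (reduce_state n t)) /\
  (fermion_suppressed (Uhad p) m n s t <->
   fermion_suppressed (Uhad q) n n (iota 1 n) (reduce_state n t)).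
Proof.
move=> p m n s.
move: ht => /and3P [/eqP hsz _ hall].
set f := fun x => ((x.-1 %% n).+1)%N.
set t' := reduce_state n t.
have hperm : perm_eq [seq f x | x <- t] t' by rewrite perm_sym perm_sort.
have hsz' : size t' == n by rewrite size_sort size_map hsz.
have [σ hσ] := tuple_permP (t := Tuple hsz') hperm.
have hnth : forall i : 'I_n, f (nth 0%N t i) = nth 0%N t' (σ i).
  move=> i; have := congr1 (fun l => nth 0%N l i) hσ => /=.
  rewrite (nth_map 0%N) ?hsz // (nth_map i) ?size_enum_ord // nth_ord_enum.
  by rewrite (tnth_nth 0%N).
have npos : (0 < n)%N by rewrite expn_gt0.
have hcl : (c < 2 ^ k)%N by have := expn_gt0 2 k; lia.
have hbnd : forall i : 'I_n, ((nth 0%N t i).-1 < 2 ^ (k + q))%N.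
  move=> i; have /allP /(_ (nth 0%N t i)) := hall.
  rewrite mem_nth ?hsz // => /(_ isT) /andP [h1 h2].
  by case: (nth 0%N t i) h1 h2 => [//|y _ h2].
set d := fun i : 'I_n => (sqrtC ((2 ^ p)%N%:R))^-1 * sqrtC ((2 ^ q)%N%:R) *
  (sylv k ((nth 0%N t i).-1 %/ 2 ^ q) c)%:~R : algC.
have hB : scat (Uhad p) n s t =
  \matrix_(i, j) (d i * scat (Uhad q) n (iota 1 n) t' (σ i) j).
  apply/matrixP => i j; rewrite !mxE /Uhad -hnth /f /s !nth_iota //.
  have hj := ltn_ord j.
  rewrite -addnA add1n /=.
  have hb : (n * c + j < 2 ^ (k + q))%N.
    have h1 : (n * c + j < n * c.+1)%N by rewrite mulnS addnC ltn_add2r.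
    have h2 : (n * c.+1 <= 2 ^ (k + q))%N by rewrite expnD mulnC leq_mul2r hcl orbT.
    exact: leq_trans h1 h2.
  rewrite /p sylv_kron ?hbnd //.
  rewrite /n mulnC divnMDl // modnMDl (divn_small hj) (modn_small hj) addn0 add0n.
  rewrite /d intrM.
  have := sqrt2_neq0 q; have := sqrt2_neq0 (k + q).
  move: (sqrtC _) (sqrtC _) (_%:~R) (_%:~R) => a b x y ha hb'.
  rewrite -!mulrA; congr (_ * _); rewrite mulrCA; congr (_ * _).
  by rewrite mulrA mulfV // mul1r.
have hd : \prod_i d i != 0.
  rewrite prodf_seq_neq0; apply/allP => i _ /=.
  rewrite /d !mulf_neq0 ?invr_eq0 ?sqrt2_neq0 //.
  by case: (sylv_sq k ((nth 0%N t i).-1 %/ 2 ^ q) c) => ->; rewrite ?rmorphN /= ?oppr_eq0 oner_eq0.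
split.
- apply: amp_iff; [exact: hd | exact: norm_fact_neq0 | exact: norm_fact_neq0 |].
  by rewrite hB permanent_rs.
- apply: amp_iff; last by rewrite hB det_rs.
  + by rewrite mulf_neq0 // signr_eq0.
  + exact: norm_fact_neq0.
  + exact: norm_fact_neq0.
Qed.
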